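(* Let $c\ge0$, $n\ge 0$, and assume $q:=c^2/\chi_n(c)<1$. Define $U$ on $[0,S_q(0)]$ by the relation $$\psi_{n,c}(x)=\varphi(x)\,U(S_q(x)),\qquad \varphi(x)=(1-x^2)^{-1/4}(1-qx^2)^{-1/4},\quad x\in[0,1).$$ Then there exists a function $F=F_q$, continuous on $[0,S_q(0)]$ and depending only on $q$, satisfying $$|F(s)|\le \frac{3}{(1-q)^3}\quad\text{for all } s\in[0,S_q(0)],$$ such that $U$ solves $$U''(s)+\Big(\chi_n(c)+\frac{1}{4s^2}\Big)U(s)=F(s)\,U(s),\qquad s\in(0,S_q(0)].$$
   Context: Fix a bandwidth $c\ge 0$. The prolate spheroidal wave functions (PSWFs) $\psi_{n,c}$, $n\ge0$, are the solutions on $[-1,1]$, bounded as $|x|\to1^-$, of $\frac{d}{dx}\big[(1-x^2)\psi'(x)\big]+(\chi_n(c)-c^2x^2)\psi(x)=0$, where $0\le\chi_0(c)<\chi_1(c)<\cdots$ are the corresponding eigenvalues (so $-\chi_n(c)$ is the eigenvalue of $L_c\psi=(1-x^2)\psi''-2x\psi'-c^2x^2\psi$); one has $n(n+1)\le\chi_n(c)\le n(n+1)+c^2$. They are normalized by $\int_{-1}^1|\psi_{n,c}|^2dx=1$, $\psi_{n,c}$ has the parity of $n$, and the sign is fixed so that $\psi_{n,c}(1)\ge0$. For $0\le q<1$, $S_q(x)=\int_x^1\sqrt{(1-qt^2)/(1-t^2)}\,dt$, a decreasing homeomorphism of $[0,1]$ onto $[0,S_q(0)]$. *)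

(* Defs.v *)
From Stdlib Require Import Reals Lra List.
Open Scope R_scope.

(* psi is a C^2 solution on (-1,1) of
   ((1-x^2) psi')' + (chi - c^2 x^2) psi = 0,
   i.e. (1-x^2) psi'' - 2 x psi' + (chi - c^2 x^2) psi = 0. *)
Definition pswf_ode (c chi : R) (psi : R -> R) : Prop :=
  exists psi' psi'' : R -> R,
    forall x, -1 < x < 1 ->
      derivable_pt_lim psi x (psi' x) /\
      derivable_pt_lim psi' x (psi'' x) /\
      (1 - x^2) * psi'' x - 2 * x * psi' x + (chi - c^2 * x^2) * psi x = 0.

(* bounded as |x| -> 1^- (psi being continuous inside, this is boundedness on (-1,1)) *)
Definition bounded_on_open (psi : R -> R) : Prop :=
  exists M, forall x, -1 < x < 1 -> Rabs (psi x) <= M.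

Definition is_eigenvalue (c chi : R) : Prop :=
  exists psi, pswf_ode c chi psi /\ bounded_on_open psi /\
              exists x, -1 < x < 1 /\ psi x <> 0.

Definition is_nth_eigenvalue (c : R) (n : nat) (chi : R) : Prop :=
  is_eigenvalue c chi /\
  exists l : list R, length l = n /\ NoDup l /\
    (forall y, In y l <-> (is_eigenvalue c y /\ y < chi)).

Definition cont_on_closed (f : R -> R) (a b : R) : Prop :=
  forall x, a <= x <= b -> forall eps, eps > 0 ->
    exists d, d > 0 /\ forall y, a <= y <= b -> Rabs (y - x) < d ->
      Rabs (f y - f x) < eps.

Definition is_pswf (c : R) (n : nat) (chi : R) (psi : R -> R) : Prop :=
  is_nth_eigenvalue c n chi /\
  pswf_ode c chi psi /\
  bounded_on_open psi /\
  cont_on_closed psi (-1) 1 /\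
  (exists pr : Riemann_integrable (fun x => (psi x)^2) (-1) 1, RiemannInt pr = 1) /\
  (forall x, -1 <= x <= 1 -> psi (- x) = (-1)^n * psi x) /\
  psi 1 >= 0.

(* S = S_q, S_q(x) = int_x^1 sqrt((1-q t^2)/(1-t^2)) dt (improper at 1),
   characterized as the antiderivative of -sqrt(...) on (-1,1)
   with S(1) = 0 and S(x) -> 0 as x -> 1^-. *)
Definition is_Sq (q : R) (S : R -> R) : Prop :=
  S 1 = 0 /\
  (forall x, -1 < x < 1 ->
     derivable_pt_lim S x (- sqrt ((1 - q * x^2) / (1 - x^2)))) /\
  (forall eps, eps > 0 -> exists d, d > 0 /\
     forall x, 1 - d < x < 1 -> Rabs (S x) < eps).

Definition phi (q x : R) : R :=
  Rpower (1 - x^2) (-/4) * Rpower (1 - q * x^2) (-/4).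

(* Main.v *)
Require Import Defs.
From Stdlib Require Import Reals Lra List Psatz ClassicalEpsilon Ranalysis5.
Open Scope R_scope.
Ltac lra2 := first [lra | split; lra | split; [split; lra| lra] | split; [lra|split;lra]].


Lemma D_plus f g x a b : derivable_pt_lim f x a -> derivable_pt_lim g x b ->
  derivable_pt_lim (fun y => f y + g y) x (a + b).
Proof. intros; apply (derivable_pt_lim_plus f g); auto. Qed.
Lemma D_minus f g x a b : derivable_pt_lim f x a -> derivable_pt_lim g x b ->
  derivable_pt_lim (fun y => f y - g y) x (a - b).
Proof. intros; apply (derivable_pt_lim_minus f g); auto. Qed.
Lemma D_mult f g x a b : derivable_pt_lim f x a -> derivable_pt_lim g x b ->
  derivable_pt_lim (fun y => f y * g y) x (a * g x + f x * b).
Proof. intros; apply (derivable_pt_lim_mult f g); auto. Qed.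
Lemma D_const c x : derivable_pt_lim (fun _ => c) x 0.
Proof. apply (derivable_pt_lim_const c). Qed.
Lemma D_id x : derivable_pt_lim (fun y => y) x 1.
Proof. apply derivable_pt_lim_id. Qed.
Lemma D_comp f g x a b : derivable_pt_lim f x a -> derivable_pt_lim g (f x) b ->
  derivable_pt_lim (fun y => g (f y)) x (b * a).
Proof. intros; apply (derivable_pt_lim_comp f g); auto. Qed.
Lemma D_ext f g x a b : (forall y, f y = g y) -> a = b -> derivable_pt_lim f x a ->
  derivable_pt_lim g x b.
Proof. intros H -> H1. apply (derivable_pt_lim_ext f g); auto. Qed.
Lemma D_eq f x a b : a = b -> derivable_pt_lim f x a -> derivable_pt_lim f x b.
Proof. intros ->; auto. Qed.
Lemma D_inv f x a : derivable_pt_lim f x a -> f x <> 0 ->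
  derivable_pt_lim (fun y => / f y) x (- a / (f x)^2).
Proof.
  intros H Hn.
  assert (pr : derivable_pt f x) by (exists a; exact H).
  assert (pr2 := derivable_pt_div (fct_cte 1) f x (derivable_pt_const 1 x) pr Hn).
  assert (E := derive_pt_div (fct_cte 1) f x (derivable_pt_const 1 x) pr Hn).
  rewrite derive_pt_const in E.
  replace (derive_pt f x pr) with a in E.
  2:{ symmetry; apply derive_pt_eq_0; exact H. }
  apply derive_pt_eq_1 in E.
  eapply D_ext; [| | exact E].
  - intros y; unfold div_fct, fct_cte, Rdiv; ring.
  - unfold fct_cte, Rsqr; simpl; field; auto.
Qed.
Lemma D_sqrt f x a : derivable_pt_lim f x a -> 0 < f x ->
  derivable_pt_lim (fun y => sqrt (f y)) x (a / (2 * sqrt (f x))).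
Proof. intros H H0. eapply D_eq; [|apply (D_comp f sqrt); [exact H| apply derivable_pt_lim_sqrt; auto]].
  assert (0 < sqrt (f x)) by (apply sqrt_lt_R0; auto). field; lra. Qed.
Lemma D_exp f x a : derivable_pt_lim f x a ->
  derivable_pt_lim (fun y => exp (f y)) x (exp (f x) * a).
Proof. intros H. apply (D_comp f exp); auto. apply derivable_pt_lim_exp. Qed.
Lemma D_ln f x a : derivable_pt_lim f x a -> 0 < f x ->
  derivable_pt_lim (fun y => ln (f y)) x (a / f x).
Proof. intros H H0. eapply D_eq; [|apply (D_comp f ln); [exact H| apply derivable_pt_lim_ln; auto]].
  field; lra. Qed.
Lemma D_pow2 f x a : derivable_pt_lim f x a ->
  derivable_pt_lim (fun y => (f y)^2) x (2 * f x * a).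
Proof. intros H. eapply D_ext; [| |apply (D_mult f f x a a H H)]. intros; simpl; ring. ring. Qed.


Definition lim1 (f:R->R) (l:R) := forall eps, eps>0 -> exists d, d>0 /\
  forall x, 1-d<x<1 -> Rabs (f x - l) < eps.

Lemma mono_deriv (f f' : R -> R) a b :
  (forall y, a < y < b -> derivable_pt_lim f y (f' y)) ->
  (forall y, a < y < b -> f' y <= 0) ->
  forall x y, a < x -> x <= y -> y < b -> f y <= f x.
Proof.
  intros Hd Hn x y Hx Hxy Hy.
  destruct (Req_dec x y) as [->|Hne]; [lra|].
  destruct (MVT_cor2 f f' x y) as [c [Hc1 Hc2]]; [lra| |].
  - intros c Hc; apply Hd; lra.
  - assert (f' c <= 0) by (apply Hn; lra). nra.
Qed.

Lemma cmp_lemma (f f' : R -> R) x0 :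
  (forall y, x0 < y < 1 -> derivable_pt_lim f y (f' y)) ->
  (forall y, x0 < y < 1 -> f' y <= 0) ->
  lim1 f 0 ->
  forall x, x0 < x < 1 -> 0 <= f x.
Proof.
  intros Hd Hn Hl x Hx.
  destruct (Rle_or_lt 0 (f x)) as [h|h]; auto.
  destruct (Hl (- f x)) as [d [Hd0 Hd1]]; [lra|].
  set (y := Rmax x (1 - d/2)).
  assert (Hy1 : x <= y) by (apply Rmax_l).
  assert (Hy2 : 1 - d/2 <= y) by (apply Rmax_r).
  assert (Hy3 : y < 1) by (unfold y; apply Rmax_lub_lt; lra).
  assert (H1 := Hd1 y ltac:(lra)).
  assert (H2 := mono_deriv f f' x0 1 Hd Hn x y ltac:(lra) Hy1 Hy3).
  rewrite Rminus_0_r in H1. apply Rabs_def2 in H1. lra.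
Qed.

Lemma D_w y : y < 1 ->
  derivable_pt_lim (fun t => (1 - t) * sqrt (1 - t)) y (- (3/2) * sqrt (1 - y)).
Proof.
  intros Hy.
  assert (Hs : 0 < sqrt (1 - y)) by (apply sqrt_lt_R0; lra).
  eapply D_eq; [|apply D_mult; [apply D_minus; [apply D_const|apply D_id]|
     apply D_sqrt; [apply D_minus; [apply D_const|apply D_id]|lra]]].
  assert (E : sqrt (1 - y) * sqrt (1 - y) = 1 - y) by (apply sqrt_sqrt; lra).
  set (s := sqrt (1 - y)) in *. rewrite <- E. field. lra.
Qed.

Lemma lim1_w : lim1 (fun t => (1 - t) * sqrt (1 - t)) 0.
Proof.
  intros eps He. exists (Rmin 1 eps). split; [apply Rmin_pos; lra|].
  intros x Hx. assert (H1 := Rmin_l 1 eps). assert (H2 := Rmin_r 1 eps).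
  assert (0 < sqrt (1 - x)) by (apply sqrt_lt_R0; lra).
  assert (sqrt (1 - x) <= 1).
  { apply Rle_trans with (sqrt 1); [apply sqrt_le_1_alt; lra| rewrite sqrt_1; lra]. }
  rewrite Rminus_0_r, Rabs_pos_eq.
  - nra.
  - apply Rmult_le_pos; lra.
Qed.

Lemma lim1_plus f g a b : lim1 f a -> lim1 g b -> lim1 (fun x => f x + g x) (a + b).
Proof.
  intros Hf Hg eps He. destruct (Hf (eps/2)) as [d1 [H1 H1']]; [lra|].
  destruct (Hg (eps/2)) as [d2 [H2 H2']]; [lra|].
  exists (Rmin d1 d2). split; [apply Rmin_pos; lra|]. intros x Hx.
  assert (A1 := Rmin_l d1 d2). assert (A2 := Rmin_r d1 d2).
  assert (B1 := H1' x ltac:(lra)). assert (B2 := H2' x ltac:(lra)).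
  replace (f x + g x - (a + b)) with ((f x - a) + (g x - b)) by ring.
  eapply Rle_lt_trans; [apply Rabs_triang|]. lra.
Qed.

Lemma lim1_scal f a k : lim1 f a -> lim1 (fun x => k * f x) (k * a).
Proof.
  intros Hf eps He. destruct (Hf (eps / (Rabs k + 1))) as [d [H1 H1']].
  { apply Rdiv_lt_0_compat; [lra| assert (0 <= Rabs k) by apply Rabs_pos; lra]. }
  exists d; split; auto. intros x Hx. assert (B := H1' x Hx).
  replace (k * f x - k * a) with (k * (f x - a)) by ring. rewrite Rabs_mult.
  assert (0 <= Rabs k) by apply Rabs_pos.
  assert (Rabs k * Rabs (f x - a) <= Rabs k * (eps / (Rabs k + 1))) by (apply Rmult_le_compat_l; lra).
  assert (Rabs k * (eps / (Rabs k + 1)) < eps).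
  { apply (Rmult_lt_reg_r (Rabs k + 1)); [lra|]. field_simplify; lra. }
  lra.
Qed.

Lemma bound_lemma (f f' : R -> R) x0 K :
  x0 < 1 ->
  (forall y, x0 < y < 1 -> derivable_pt_lim f y (f' y)) ->
  (forall y, x0 < y < 1 -> Rabs (f' y) <= K * sqrt (1 - y)) ->
  lim1 f 0 ->
  forall x, x0 < x < 1 -> Rabs (f x) <= (2/3) * K * ((1 - x) * sqrt (1 - x)).
Proof.
  intros Hx0 Hd Hb Hl x Hx.
  assert (Hw0 := lim1_scal _ _ ((2/3)*K) lim1_w).
  rewrite Rmult_0_r in Hw0.
  assert (A : 0 <= f x + (2/3) * K * ((1 - x) * sqrt (1 - x))).
  { apply (cmp_lemma (fun t => f t + (2/3) * K * ((1 - t) * sqrt (1 - t)))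
            (fun t => f' t + (2/3) * K * (- (3/2) * sqrt (1 - t))) x0); auto.
    - intros y Hy. apply D_plus; auto. eapply D_eq; [|apply D_mult; [apply D_const|apply D_w; lra]].
      field_simplify; ring_simplify; auto.
    - intros y Hy. assert (B := Hb y Hy). assert (h1 := Rle_abs (f' y)); assert (h2 := Rle_abs (- f' y)); rewrite Rabs_Ropp in h2. lra.
    - replace 0 with (0 + 0) by ring. apply lim1_plus; auto. }
  assert (A2 : 0 <= (2/3) * K * ((1 - x) * sqrt (1 - x)) - f x).
  { replace ((2/3) * K * ((1 - x) * sqrt (1 - x)) - f x) with ((fun t => (2/3) * K * ((1 - t) * sqrt (1 - t)) + (-1) * f t) x) by ring.
    apply (cmp_lemma (fun t => (2/3) * K * ((1 - t) * sqrt (1 - t)) + (-1) * f t)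
            (fun t => (2/3) * K * (- (3/2) * sqrt (1 - t)) + (-1) * f' t) x0); auto.
    - intros y Hy. apply D_plus; auto. eapply D_eq; [|apply D_mult; [apply D_const|apply D_w; lra]].
      cbv beta; cbv beta; ring. eapply D_eq; [|apply D_mult; [apply D_const|apply Hd; auto]]. cbv beta; ring.
    - intros y Hy. assert (B := Hb y Hy). assert (h1 := Rle_abs (f' y)); assert (h2 := Rle_abs (- f' y)); rewrite Rabs_Ropp in h2. lra.
    - replace 0 with (0 + (-1) * 0) by ring. apply lim1_plus; auto. apply lim1_scal; auto. }
  apply Rabs_le; lra.
Qed.

Lemma lim1_limit f l : lim1 f l <-> limit1_in f (fun x => x < 1) l 1.
Proof.
  unfold lim1, limit1_in, limit_in; simpl; unfold R_dist. split.
  - intros H eps He. destruct (H eps He) as [d [Hd H']]. exists d; split; auto.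
    intros x [Hx1 Hx2]. apply H'. apply Rabs_def2 in Hx2. lra.
  - intros H eps He. destruct (H eps He) as [d [Hd H']]. exists d; split; auto.
    intros x Hx. apply H'. split; [lra|]. apply Rabs_def1; lra.
Qed.

Lemma lim1_mult f g a b : lim1 f a -> lim1 g b -> lim1 (fun x => f x * g x) (a * b).
Proof. rewrite !lim1_limit. apply limit_mul. Qed.
Lemma lim1_inv f a : lim1 f a -> a <> 0 -> lim1 (fun x => / f x) (/ a).
Proof. rewrite !lim1_limit. intros; apply limit_inv; auto. Qed.
Lemma lim1_minus f g a b : lim1 f a -> lim1 g b -> lim1 (fun x => f x - g x) (a - b).
Proof. rewrite !lim1_limit. apply limit_minus. Qed.
Lemma lim1_const c : lim1 (fun _ => c) c.
Proof. intros eps He; exists 1; split; [lra|]; intros; rewrite Rminus_diag, Rabs_R0; lra. Qed.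
Lemma lim1_cont f : continuity_pt f 1 -> lim1 f (f 1).
Proof.
  intros H eps He. destruct (H eps He) as [d [Hd H']]. exists d; split; auto.
  intros x Hx. apply H'. unfold D_x, no_cond. split; [split; auto; lra|].
  simpl; unfold R_dist. apply Rabs_def1; lra.
Qed.
Lemma lim1_ext f g l : (forall x, 0 < x < 1 -> f x = g x) -> lim1 f l -> lim1 g l.
Proof.
  intros E H eps He. destruct (H eps He) as [d [Hd H']]. exists (Rmin d 1); split.
  { apply Rmin_pos; lra. }
  intros x Hx. assert (Rmin d 1 <= d) by apply Rmin_l. assert (Rmin d 1 <= 1) by apply Rmin_r.
  rewrite <- E by lra. apply H'. lra.
Qed.
Lemma lim1_bound f l B : lim1 f l -> (forall x, 0 < x < 1 -> Rabs (f x) <= B) -> Rabs l <= B.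
Proof.
  intros H Hb. destruct (Rle_or_lt (Rabs l) B) as [h|h]; auto.
  destruct (H (Rabs l - B)) as [d [Hd H']]; [lra|].
  set (x := Rmax (1 - d/2) (1/2)).
  assert (x < 1) by (unfold x; apply Rmax_lub_lt; lra).
  assert (1 - d/2 <= x) by apply Rmax_l. assert (1/2 <= x) by apply Rmax_r.
  assert (A := H' x ltac:(lra)). assert (B1 := Hb x ltac:(lra)).
  assert (C := Rabs_triang_inv l (f x)). rewrite <- Rabs_Ropp in A.
  replace (- (f x - l)) with (l - f x) in A by ring. lra.
Qed.
Lemma cont_of_D f x l : derivable_pt_lim f x l -> continuity_pt f x.
Proof. intros H. apply derivable_continuous_pt. exists l; exact H. Qed.


Definition gg q x := sqrt ((1 - x^2) * (1 - q*x^2)).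
Definition gam q x := sqrt ((1 + x) * (1 - q*x^2)).
Definition kk q x := (1 - q*x - 2*q*x^2) / gam q x.
Definition wv x := (1 - x) * sqrt (1 - x).

Lemma r_pos q x : 0 <= q < 1 -> -1 <= x <= 1 -> 0 < 1 - q <= 1 - q * x^2.
Proof. intros. assert (x^2 <= 1) by nra. nra. Qed.

Lemma sqrt_sq_eq y : 0 <= y -> sqrt y * sqrt y = y.
Proof. apply sqrt_sqrt. Qed.

Lemma gam_pos q x : 0 <= q < 1 -> -1 < x <= 1 -> 0 < gam q x.
Proof. intros. unfold gam. apply sqrt_lt_R0. assert (h := r_pos q x H ltac:(lra2)). apply Rmult_lt_0_compat; lra. Qed.

Lemma gg_split q x : 0 <= q < 1 -> -1 < x < 1 -> gg q x = sqrt (1 - x) * gam q x.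
Proof.
  intros. unfold gg, gam. assert (h := r_pos q x H ltac:(lra2)).
  rewrite <- sqrt_mult; [|lra|apply Rmult_le_pos; lra]. f_equal. ring.
Qed.

Lemma gg_pos q x : 0 <= q < 1 -> -1 < x < 1 -> 0 < gg q x.
Proof.
  intros. rewrite gg_split by auto. apply Rmult_lt_0_compat; [apply sqrt_lt_R0; lra| apply gam_pos; auto; lra].
Qed.

Lemma gg_sq q x : 0 <= q < 1 -> -1 < x < 1 -> gg q x * gg q x = (1 - x^2) * (1 - q * x^2).
Proof. intros. unfold gg. apply sqrt_sqrt. assert (h := r_pos q x H ltac:(lra2)).
  assert (0 < 1 - x^2) by nra. apply Rmult_le_pos; lra. Qed.

Lemma sqrt_ratio q x : 0 <= q < 1 -> -1 < x < 1 ->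
  sqrt ((1 - q * x^2) / (1 - x^2)) = (1 - q * x^2) / gg q x.
Proof.
  intros. assert (h := r_pos q x H ltac:(lra2)). assert (hp : 0 < 1 - x^2) by nra.
  assert (hg := gg_pos q x H H0).
  unfold gg. rewrite sqrt_mult by lra. rewrite sqrt_div by lra.
  assert (e := sqrt_sqrt (1 - q*x^2) ltac:(lra2)).
  assert (0 < sqrt (1 - x^2)) by (apply sqrt_lt_R0; lra).
  assert (0 < sqrt (1 - q*x^2)) by (apply sqrt_lt_R0; lra).
  rewrite <- e at 2. field. lra.
Qed.

Lemma S_der q S x : 0 <= q < 1 -> is_Sq q S -> -1 < x < 1 ->
  derivable_pt_lim S x (- ((1 - q * x^2) / gg q x)).
Proof.
  intros Hq [_ [HS _]] Hx. rewrite <- sqrt_ratio by auto. apply HS; auto.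
Qed.

Lemma gg_der q x : 0 <= q < 1 -> -1 < x < 1 ->
  derivable_pt_lim (gg q) x ((-2*x*(1-q*x^2) + (1-x^2)*(-2*q*x)) / (2 * gg q x)).
Proof.
  intros. unfold gg at 1.
  assert (h := r_pos q x H ltac:(lra2)).
  assert (0 < 1 - x^2) by nra.
  eapply D_eq; [|apply (D_sqrt (fun y => (1 - y^2) * (1 - q*y^2))); [|apply Rmult_lt_0_compat; lra]].
  - reflexivity.
  - eapply D_eq; [|apply D_mult; (apply D_minus; [apply D_const| ]);
      [apply D_pow2; apply D_id| apply D_mult; [apply D_const|apply D_pow2; apply D_id]]].
    cbv beta. ring.
Qed.

Lemma D_der q S x : 0 <= q < 1 -> is_Sq q S -> -1 < x < 1 ->
  derivable_pt_lim (fun y => gg q y - S y) x (sqrt (1 - x) * kk q x).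
Proof.
  intros Hq HS Hx.
  eapply D_eq; [|apply D_minus; [apply gg_der; auto| apply (S_der q); auto]].
  unfold kk. rewrite gg_split by auto.
  assert (e := sqrt_sqrt (1 - x) ltac:(lra2)).
  assert (0 < sqrt (1 - x)) by (apply sqrt_lt_R0; lra).
  assert (0 < gam q x) by (apply gam_pos; auto; lra).
  set (s := sqrt (1 - x)) in *. set (G := gam q x) in *.
  assert (s <> 0) by lra. assert (G <> 0) by lra.
  field_simplify; auto.
  replace (4 * x ^ 3 * q - 2 * x ^ 2 * q - 2 * x * q - 2 * x + 2) with (2*(s*s)*(1 - q*x - 2*q*x^2)) by (rewrite e; ring).
  field. auto.
Qed.

Lemma lim1_sqrt_small (f : R -> R) : (forall eps, eps > 0 -> exists d, d > 0 /\
  forall x, 1 - d < x < 1 -> 0 <= f x < eps) -> lim1 (fun x => sqrt (f x)) 0.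
Proof.
  intros H eps He. destruct (H (eps*eps)) as [d [Hd H']]; [nra|]. exists d; split; auto.
  intros x Hx. destruct (H' x Hx) as [h1 h2]. rewrite Rminus_0_r, Rabs_pos_eq by (apply sqrt_pos).
  rewrite <- (sqrt_square eps) by lra. apply sqrt_lt_1_alt. lra.
Qed.

Lemma lim1_gg q : 0 <= q < 1 -> lim1 (gg q) 0.
Proof.
  intros Hq. apply lim1_sqrt_small. intros eps He. exists (Rmin (eps/2) 1). split.
  { apply Rmin_pos; lra. }
  intros x Hx. assert (Rmin (eps/2) 1 <= eps/2) by apply Rmin_l. assert (Rmin (eps/2) 1 <= 1) by apply Rmin_r.
  assert (h := r_pos q x Hq ltac:(lra2)). assert (0 < 1 - x^2) by nra.
  split. apply Rmult_le_pos; lra.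
  assert (1 - q*x^2 <= 1) by nra.
  assert (1 - x^2 < eps) by nra. nra.
Qed.

Lemma lim1_S q S : is_Sq q S -> lim1 S 0.
Proof.
  intros [_ [_ H]] eps He. destruct (H eps He) as [d [Hd H']]. exists d; split; auto.
  intros; rewrite Rminus_0_r; auto.
Qed.

Lemma lim1_D q S : 0 <= q < 1 -> is_Sq q S -> lim1 (fun y => gg q y - S y) 0.
Proof.
  intros. replace 0 with (0 - 0) by ring. apply lim1_minus; [apply lim1_gg| apply (lim1_S q)]; auto.
Qed.

Lemma kk_bound q x : 0 <= q < 1 -> -1/2 < x < 1 -> Rabs (kk q x) <= 3 / sqrt (1 - q).
Proof.
  intros Hq Hx. unfold kk. assert (h := r_pos q x Hq ltac:(lra2)).
  assert (hg := gam_pos q x Hq ltac:(lra2)).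
  assert (ha : 0 < sqrt (1 - q)) by (apply sqrt_lt_R0; lra).
  assert (N : Rabs (1 - q*x - 2*q*x^2) <= 2).
  { apply Rabs_le. split; nra. }
  assert (G : 2 * sqrt (1 - q) <= 3 * gam q x).
  { unfold gam. rewrite <- (sqrt_square 2) by lra. rewrite <- (sqrt_square 3) by lra.
    rewrite <- !sqrt_mult; try nra. apply sqrt_le_1_alt. nra. }
  unfold Rdiv; rewrite Rabs_mult, Rabs_inv, (Rabs_pos_eq (gam q x)) by lra.
  apply Rle_trans with (2 * / gam q x).
  { apply Rmult_le_compat_r; [left; apply Rinv_0_lt_compat; lra| auto]. }
  apply (Rmult_le_reg_l (gam q x * sqrt (1 - q))); [nra|].
  replace (gam q x * sqrt (1 - q) * (2 * / gam q x)) with (2 * sqrt (1 - q)) by (field; lra).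
  replace (gam q x * sqrt (1 - q) * (3 * / sqrt (1 - q))) with (3 * gam q x) by (field; lra).
  lra.
Qed.

Lemma D_bound q S x : 0 <= q < 1 -> is_Sq q S -> -1/2 < x < 1 ->
  Rabs (gg q x - S x) <= 2 / sqrt (1 - q) * wv x.
Proof.
  intros Hq HS Hx.
  assert (ha : 0 < sqrt (1 - q)) by (apply sqrt_lt_R0; lra).
  replace (2 / sqrt (1 - q) * wv x) with ((2/3) * (3 / sqrt (1 - q)) * ((1 - x) * sqrt (1 - x))).
  2:{ unfold wv. field. lra. }
  apply (bound_lemma (fun y => gg q y - S y) (fun y => sqrt (1 - y) * kk q y) (-1/2)); auto; try lra.
  - intros; apply D_der; auto; lra.
  - intros y Hy. rewrite Rabs_mult, Rabs_pos_eq by apply sqrt_pos.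
    rewrite Rmult_comm. apply Rmult_le_compat_r; [apply sqrt_pos|]. apply kk_bound; auto.
  - apply lim1_D; auto.
Qed.

Lemma lim1_sqrt1 : lim1 (fun y => sqrt (1 - y)) 0.
Proof.
  apply lim1_sqrt_small. intros eps He. exists eps. split; auto. intros; lra.
Qed.

Lemma S_lower q S x : 0 <= q < 1 -> is_Sq q S -> -1 < x < 1 ->
  sqrt (2 * (1 - q)) * sqrt (1 - x) <= S x.
Proof.
  intros Hq HS Hx.
  set (c := sqrt (2 * (1 - q))).
  cut (0 <= S x + (- c) * sqrt (1 - x)); [lra|].
  apply (cmp_lemma (fun y => S y + (- c) * sqrt (1 - y))
     (fun y => - ((1 - q * y^2) / gg q y) + (- c) * ((0 - 1) / (2 * sqrt (1 - y)))) (-1)); auto.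
  - intros y Hy. apply D_plus; [apply S_der; auto|].
    eapply D_eq; [|apply D_mult; [apply D_const| apply D_sqrt; [apply D_minus; [apply D_const|apply D_id]|lra]]].
    cbv beta; ring.
  - intros y Hy. rewrite gg_split by auto.
    assert (h := r_pos q y Hq ltac:(lra2)).
    assert (0 < sqrt (1 - y)) by (apply sqrt_lt_R0; lra).
    assert (0 < gam q y) by (apply gam_pos; auto; lra).
    assert (Hc : c * gam q y <= 2 * (1 - q * y^2)).
    { unfold c, gam. rewrite <- sqrt_mult by (try apply Rmult_le_pos; lra).
      rewrite <- (sqrt_square (2 * (1 - q*y^2))) by lra. apply sqrt_le_1_alt.
      assert ((1 - q) * (1 + y) <= 2 * (1 - q * y^2)) by nra.
      assert (0 < 1 - q * y^2) by lra.
      replace (2 * (1 - q) * ((1 + y) * (1 - q * y ^ 2))) with (2 * ((1 - q) * (1 + y)) * (1 - q * y ^ 2)) by ring.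
      replace (2 * (1 - q * y ^ 2) * (2 * (1 - q * y ^ 2))) with (2 * (2 * (1 - q * y ^ 2)) * (1 - q * y ^ 2)) by ring.
      apply Rmult_le_compat_r; lra. }
    set (s := sqrt (1 - y)) in *. set (G := gam q y) in *.
    assert (E : - ((1 - q * y ^ 2) / (s * G)) + - c * ((0 - 1) / (2 * s)) = (c * G - 2 * (1 - q*y^2)) / (2 * s * G)) by (field; lra).
    rewrite E. unfold Rdiv. assert (0 < / (2 * s * G)) by (apply Rinv_0_lt_compat; nra). nra.
  - replace 0 with (0 + (-c) * 0) by ring. apply lim1_plus; [apply (lim1_S q); auto|].
    apply lim1_scal, lim1_sqrt1.
Qed.

Definition dlt q S x := (gg q x - S x) / wv x.

Lemma kk_cont q : 0 <= q < 1 -> continuity_pt (kk q) 1.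
Proof.
  intros Hq. change (kk q) with (fun x => (1 - q*x - 2*q*x^2) * / gam q x).
  assert (hg := gam_pos q 1 Hq ltac:(lra2)).
  eapply cont_of_D. apply D_mult.
  - apply D_minus; [apply D_minus; [apply D_const| apply D_mult; [apply D_const|apply D_id]]|].
    apply D_mult; [apply D_const|apply D_pow2, D_id].
  - apply D_inv; [|lra]. unfold gam. apply D_sqrt.
    + apply D_mult; [apply D_plus; [apply D_const|apply D_id]|].
      apply D_minus; [apply D_const|]. apply D_mult; [apply D_const|apply D_pow2, D_id].
    + nra.
Qed.

Lemma wv_pos x : x < 1 -> 0 < wv x.
Proof. intros. unfold wv. apply Rmult_lt_0_compat; [lra| apply sqrt_lt_R0; lra]. Qed.

Lemma dlt_lim q S : 0 <= q < 1 -> is_Sq q S -> lim1 (dlt q S) (-(2/3) * kk q 1).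
Proof.
  intros Hq HS eps He.
  destruct (lim1_cont _ (kk_cont q Hq) eps He) as [d [Hd Hk]].
  set (x0 := Rmax (1 - d) (-1/2)).
  assert (A1 : 1 - d <= x0) by apply Rmax_l. assert (A2 : -1/2 <= x0) by apply Rmax_r.
  assert (A3 : x0 < 1) by (apply Rmax_lub_lt; lra).
  exists (1 - x0). split; [lra|]. intros x Hx.
  set (k1 := kk q 1).
  assert (B := bound_lemma (fun y => (gg q y - S y) + (2/3)*k1*wv y)
     (fun y => sqrt (1 - y) * kk q y + (2/3)*k1*(-(3/2)*sqrt (1 - y))) x0 eps A3).
  assert (C : Rabs ((gg q x - S x) + (2/3)*k1*wv x) <= (2/3) * eps * wv x).
  { apply B; [| | |lra].
    - intros y Hy. apply D_plus; [apply D_der; auto; lra|].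
      eapply D_eq; [|apply D_mult; [apply D_const|apply D_w; lra]]. cbv beta; ring.
    - intros y Hy. replace (sqrt (1 - y) * kk q y + 2 / 3 * k1 * (- (3 / 2) * sqrt (1 - y)))
        with (sqrt (1 - y) * (kk q y - k1)) by field.
      rewrite Rabs_mult, Rabs_pos_eq by apply sqrt_pos. rewrite Rmult_comm.
      apply Rmult_le_compat_r; [apply sqrt_pos|]. left; apply Hk; lra.
    - replace 0 with (0 + (2/3)*k1*0) by ring. apply lim1_plus; [apply lim1_D; auto|].
      apply lim1_scal, lim1_w. }
  assert (hw := wv_pos x ltac:(lra)).
  unfold dlt. replace ((gg q x - S x) / wv x - - (2 / 3) * k1) with
     (((gg q x - S x) + (2/3)*k1*wv x) / wv x) by (field; lra).
  unfold Rdiv; rewrite Rabs_mult, Rabs_inv, (Rabs_pos_eq (wv x)) by lra.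
  apply Rle_lt_trans with ((2/3) * eps * wv x * / wv x).
  { apply Rmult_le_compat_r; [left; apply Rinv_0_lt_compat; lra| auto]. }
  replace ((2/3) * eps * wv x * / wv x) with ((2/3)*eps) by (field; lra). lra.
Qed.


Definition PP q x := (-1 + 2*q*(2*x^2-1)/(1-q*x^2) - 5*q^2*x^2*(1-x^2)/(1-q*x^2)^2)/(4*(1-q*x^2)).
Definition Hx q s x := 1/(4*s^2) - 1/(4*((1-x^2)*(1-q*x^2))) + PP q x.
Definition Lq q := (-(2/3) * kk q 1) / (2 * (gam q 1)^3) + PP q 1.

Lemma PP_cont q : 0 <= q < 1 -> continuity_pt (PP q) 1.
Proof. intros Hq. unfold PP. reg. all: simpl; nra. Qed.

Lemma gam_cont q : 0 <= q < 1 -> continuity_pt (gam q) 1.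
Proof. intros Hq. unfold gam. reg. simpl; nra. Qed.

Lemma Hx_rep q S x : 0 <= q < 1 -> is_Sq q S -> 0 <= x < 1 ->
  Hx q (S x) x = dlt q S x * (2 * gam q x - (1 - x) * dlt q S x) /
     (4 * (gam q x - (1 - x) * dlt q S x)^2 * (gam q x)^2) + PP q x /\
  gam q x - (1 - x) * dlt q S x = S x / sqrt (1 - x).
Proof.
  intros Hq HS Hxx.
  assert (h := r_pos q x Hq ltac:(lra2)).
  assert (hg := gam_pos q x Hq ltac:(lra2)).
  assert (hs : 0 < sqrt (1 - x)) by (apply sqrt_lt_R0; lra).
  assert (e := sqrt_sqrt (1 - x) ltac:(lra)).
  assert (eg := sqrt_sqrt ((1 + x) * (1 - q*x^2)) ltac:(apply Rmult_le_pos; lra)).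
  assert (gs := gg_split q x Hq ltac:(lra2)).
  assert (Sl := S_lower q S x Hq HS ltac:(lra2)).
  assert (0 < sqrt (2 * (1 - q))) by (apply sqrt_lt_R0; lra).
  assert (Spos : 0 < S x) by nra.
  unfold dlt, wv in *. rewrite gs. unfold gam in *.
  set (s := sqrt (1 - x)) in *. set (G := sqrt ((1 + x) * (1 - q * x ^ 2))) in *.
  set (D := s * G - S x).
  assert (E1 : 1 - x = s * s) by lra.
  assert (E2 : (1 - x^2) * (1 - q * x^2) = (s*s) * (G*G)).
  { rewrite eg, <- E1. ring. }
  assert (E3 : S x = s * G - D) by (unfold D; ring).
  assert (E4 : G - (1 - x) * (D / ((1 - x) * s)) = S x / s).
  { rewrite E3, E1. field. lra. }
  split; auto.
  assert (0 < G - (1 - x) * (D / ((1 - x) * s))).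
  { rewrite E4. apply Rdiv_lt_0_compat; lra. }
  revert H0 E4. rewrite E1. intros H0 E4.
  unfold Hx. rewrite E2, E3. field. repeat split; try lra.
Qed.

Lemma lim1_eqv f l l' : lim1 f l -> l = l' -> lim1 f l'.
Proof. intros H ->; auto. Qed.

Lemma Hx_lim q S : 0 <= q < 1 -> is_Sq q S -> lim1 (fun x => Hx q (S x) x) (Lq q).
Proof.
  intros Hq HS.
  set (d1 := -(2/3) * kk q 1). set (g1 := gam q 1).
  assert (hg1 := gam_pos q 1 Hq ltac:(lra2)). fold g1 in hg1.
  assert (Ld := dlt_lim q S Hq HS). fold d1 in Ld.
  assert (Lg := lim1_cont _ (gam_cont q Hq)). fold g1 in Lg.
  assert (Lp := lim1_cont _ (PP_cont q Hq)).
  assert (Lu : lim1 (fun x => 1 - x) 0).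
  { apply lim1_eqv with (1 - 1); [|ring]. apply lim1_minus; [apply lim1_const|].
    intros eps He; exists eps; split; auto; intros; apply Rabs_def1; lra. }
  assert (L1 : lim1 (fun x => 1 - x) 0) by exact Lu.
  assert (Lud := lim1_mult _ _ _ _ Lu Ld). rewrite Rmult_0_l in Lud.
  assert (Lt := lim1_minus _ _ _ _ Lg Lud). rewrite Rminus_0_r in Lt.
  assert (Ln := lim1_minus _ _ _ _ (lim1_scal _ _ 2 Lg) Lud). rewrite Rminus_0_r in Ln.
  assert (Lt2 := lim1_mult _ _ _ _ Lt Lt).
  assert (Lg2 := lim1_mult _ _ _ _ Lg Lg).
  assert (Lden := lim1_mult _ _ _ _ (lim1_scal _ _ 4 Lt2) Lg2).
  assert (Hnz : 4 * (g1 * g1) * (g1 * g1) <> 0).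
  { assert (0 < g1*g1) by (apply Rmult_lt_0_compat; lra). apply Rgt_not_eq. apply Rmult_lt_0_compat; [apply Rmult_lt_0_compat; [lra| assumption] | assumption]. }
  assert (Li := lim1_inv _ _ Lden Hnz).
  assert (Lall := lim1_plus _ _ _ _ (lim1_mult _ _ _ _ (lim1_mult _ _ _ _ Ld Ln) Li) Lp).
  eapply lim1_eqv.
  - eapply lim1_ext; [|exact Lall]. intros x Hx0. cbv beta.
    destruct (Hx_rep q S x Hq HS ltac:(lra2)) as [E _]. rewrite E.
    unfold Rdiv. simpl. rewrite !Rmult_1_r. reflexivity.
  - unfold Lq. fold d1 g1. field. lra.
Qed.
Lemma sing_bound d g t b : 0 < b -> b <= g -> b <= t -> Rabs d <= 2 / b ->
  Rabs (d * (g + t) / (4 * t^2 * g^2)) <= 1 / b^4.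
Proof.
  intros Hb Hg Ht Hd.
  assert (0 < g) by lra. assert (0 < t) by lra.
  replace (d * (g + t) / (4 * t^2 * g^2)) with (d * ((/t) * (/g) * (/g) + (/t) * (/t) * (/g)) / 4) by (field; lra).
  set (it := /t). set (ig := /g). set (ib := /b).
  assert (0 < it) by (apply Rinv_0_lt_compat; lra).
  assert (0 < ig) by (apply Rinv_0_lt_compat; lra).
  assert (it <= ib) by (apply Rinv_le_contravar; lra).
  assert (ig <= ib) by (apply Rinv_le_contravar; lra).
  replace (2 / b) with (2 * ib) in Hd by (unfold ib; field; lra).
  replace (1 / b^4) with (ib*ib*ib*ib) by (unfold ib; field; lra).
  unfold Rdiv. rewrite !Rabs_mult. rewrite (Rabs_pos_eq (it * ig * ig + it * it * ig)) by nra.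
  rewrite (Rabs_pos_eq (/4)) by lra.
  assert (it * ig * ig <= ib*ib*ib).
  { apply Rmult_le_compat; try nra; try (apply Rmult_le_compat; lra). }
  assert (it * it * ig <= ib*ib*ib).
  { apply Rmult_le_compat; try nra; try (apply Rmult_le_compat; lra). }
  assert (0 <= Rabs d) by apply Rabs_pos.
  assert (Rabs d * (it * ig * ig + it * it * ig) <= (2*ib) * (2 * (ib*ib*ib))).
  { apply Rmult_le_compat; nra. }
  nra.
Qed.

Lemma PP_bound_aux q y t A : 0 <= q < 1 -> 0 <= y <= 1 -> 1 <= t <= A ->
  Rabs ((-1 + 2*q*(2*y-1)*t - 5*q^2*y*(1-y)*t^2) * t / 4) <= 2 * A^3.
Proof.
  intros [Hq1 Hq2] [Hy1 Hy2] [Ht1 Ht2].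
  assert (h1 : Rabs (2*q*(2*y-1)*t) <= 2 * t).
  { rewrite !Rabs_mult. rewrite (Rabs_pos_eq 2), (Rabs_pos_eq q), (Rabs_pos_eq t) by lra.
    assert (Rabs (2*y-1) <= 1) by (apply Rabs_le; split; lra).
    assert (0 <= Rabs (2*y-1)) by apply Rabs_pos.
    assert (q * Rabs (2*y-1) <= 1) by nra.
    assert (q * Rabs (2*y-1) * t <= t) by nra. nra. }
  assert (h2 : Rabs (5*q^2*y*(1-y)*t^2) <= 5/4 * t^2).
  { rewrite Rabs_pos_eq.
    - assert (y*(1-y) <= 1/4) by (assert (0 <= (y-1/2)^2) by apply pow2_ge_0; nra).
      assert (q^2 <= 1) by (simpl; nra).
      assert (0 <= q^2) by apply pow2_ge_0. assert (0 <= y*(1-y)) by (apply Rmult_le_pos; lra).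
      assert (q^2 * (y*(1-y)) <= 1/4) by nra.
      assert (0 <= t^2) by apply pow2_ge_0.
      replace (5 * q ^ 2 * y * (1 - y) * t ^ 2) with (5 * (q^2 * (y*(1-y))) * t^2) by ring. nra.
    - assert (0 <= y*(1-y)) by (apply Rmult_le_pos; lra). assert (0 <= q^2) by apply pow2_ge_0.
      assert (0 <= t^2) by apply pow2_ge_0.
      replace (5 * q ^ 2 * y * (1 - y) * t ^ 2) with (5 * (q^2 * (y*(1-y))) * t^2) by ring.
      apply Rmult_le_pos; [apply Rmult_le_pos|]; nra. }
  assert (h3 : Rabs (-1 + 2*q*(2*y-1)*t - 5*q^2*y*(1-y)*t^2) <= 1 + 2*t + 5/4*t^2).
  { set (A1 := 2*q*(2*y-1)*t) in *. set (B := 5*q^2*y*(1-y)*t^2) in *.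
    assert (a1 := Rle_abs A1). assert (a2 := Rle_abs (-A1)). rewrite Rabs_Ropp in a2.
    assert (b1 := Rle_abs B). assert (b2 := Rle_abs (-B)). rewrite Rabs_Ropp in b2.
    apply Rabs_le; split; lra. }
  unfold Rdiv. rewrite !Rabs_mult. rewrite (Rabs_pos_eq t), (Rabs_pos_eq (/4)) by lra.
  assert (0 <= Rabs (-1 + 2*q*(2*y-1)*t - 5*q^2*y*(1-y)*t^2)) by apply Rabs_pos.
  assert (1 + 2*t + 5/4*t^2 <= 17/4 * t^2) by nra.
  assert (t^3 <= A^3) by (apply pow_incr; lra).
  assert (Rabs (-1 + 2*q*(2*y-1)*t - 5*q^2*y*(1-y)*t^2) * t <= 17/4 * t^3).
  { replace (17/4*t^3) with ((17/4*t^2)*t) by ring. apply Rmult_le_compat_r; lra. }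
  replace (/4) with (1/4) by field. assert (0 <= A^3) by (apply pow_le; lra). lra.
Qed.

Lemma PP_bound q x : 0 <= q < 1 -> -1 <= x <= 1 -> Rabs (PP q x) <= 2 * (/ (1 - q))^3.
Proof.
  intros Hq Hx. assert (h := r_pos q x Hq Hx).
  replace (PP q x) with ((-1 + 2*q*(2*(x^2)-1)*(/(1-q*x^2)) - 5*q^2*(x^2)*(1-x^2)*(/(1-q*x^2))^2) * (/(1-q*x^2)) / 4).
  2:{ unfold PP. field. lra. }
  apply PP_bound_aux; auto.
  - split; [apply pow2_ge_0|]. nra.
  - split.
    + rewrite <- Rinv_1. apply Rinv_le_contravar; [lra|]. assert (0 <= q * x^2) by (apply Rmult_le_pos; [lra|apply pow2_ge_0]). lra.
    + apply Rinv_le_contravar; lra.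
Qed.

Lemma Hx_bound q S x : 0 <= q < 1 -> is_Sq q S -> 0 <= x < 1 ->
  Rabs (Hx q (S x) x) <= 3 / (1 - q)^3.
Proof.
  intros Hq HS Hxx.
  destruct (Hx_rep q S x Hq HS Hxx) as [E Et]. rewrite E.
  assert (h := r_pos q x Hq ltac:(lra2)).
  set (b := sqrt (1 - q)).
  assert (hb : 0 < b) by (apply sqrt_lt_R0; lra).
  assert (eb : b * b = 1 - q) by (apply sqrt_sqrt; lra).
  assert (hs : 0 < sqrt (1 - x)) by (apply sqrt_lt_R0; lra).
  assert (Hg : b <= gam q x).
  { unfold b, gam. apply sqrt_le_1_alt. nra. }
  assert (Ht : b <= gam q x - (1 - x) * dlt q S x).
  { rewrite Et. assert (Sl := S_lower q S x Hq HS ltac:(lra2)).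
    assert (b <= sqrt (2 * (1 - q))) by (apply sqrt_le_1_alt; lra).
    apply (Rmult_le_reg_r (sqrt (1 - x))); auto.
    replace (S x / sqrt (1 - x) * sqrt (1 - x)) with (S x) by (field; lra). nra. }
  assert (Hd : Rabs (dlt q S x) <= 2 / b).
  { assert (Db := D_bound q S x Hq HS ltac:(lra2)). fold b in Db.
    assert (hw := wv_pos x ltac:(lra)). unfold dlt. unfold Rdiv at 1.
    rewrite Rabs_mult, Rabs_inv, (Rabs_pos_eq (wv x)) by lra.
    apply (Rmult_le_reg_r (wv x)); auto.
    replace (Rabs (gg q x - S x) * / wv x * wv x) with (Rabs (gg q x - S x)) by (field; lra). auto. }
  assert (Sg := sing_bound (dlt q S x) (gam q x) (gam q x - (1 - x) * dlt q S x) b hb Hg Ht Hd).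
  replace (gam q x + (gam q x - (1 - x) * dlt q S x)) with (2 * gam q x - (1 - x) * dlt q S x) in Sg by ring.
  assert (Pb := PP_bound q x Hq ltac:(lra2)).
  eapply Rle_trans; [apply Rabs_triang|].
  assert (E4 : 1 / b^4 = (/ (1 - q))^2) by (rewrite <- eb; field; lra).
  rewrite E4 in Sg.
  set (A := / (1 - q)) in *.
  assert (HA : 1 <= A) by (unfold A; rewrite <- Rinv_1; apply Rinv_le_contravar; lra).
  replace (3 / (1 - q)^3) with (3 * A^3) by (unfold A; field; lra).
  assert (A^2 <= A^3) by (simpl; nra).
  lra.
Qed.

Lemma Lq_bound q S : 0 <= q < 1 -> is_Sq q S -> Rabs (Lq q) <= 3 / (1 - q)^3.
Proof.
  intros Hq HS. apply (lim1_bound _ _ _ (Hx_lim q S Hq HS)).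
  intros; apply Hx_bound; auto; lra.
Qed.


Lemma S_decr q S x y : 0 <= q < 1 -> is_Sq q S -> -1 < x -> x < y -> y < 1 -> S y < S x.
Proof.
  intros Hq HS Hx Hxy Hy.
  destruct (MVT_cor2 S (fun t => - ((1 - q * t^2) / gg q t)) x y Hxy) as [c [E Hc]].
  - intros c Hc. apply S_der; auto; lra.
  - assert (h := r_pos q c Hq ltac:(lra2)). assert (hg := gg_pos q c Hq ltac:(lra2)).
    assert (0 < (1 - q * c^2) / gg q c) by (apply Rdiv_lt_0_compat; lra). nra.
Qed.

Lemma S_cont q S x : 0 <= q < 1 -> is_Sq q S -> -1 < x < 1 -> continuity_pt S x.
Proof. intros. eapply cont_of_D. apply (S_der q); auto. Qed.

Lemma S_pos q S x : 0 <= q < 1 -> is_Sq q S -> -1 < x < 1 -> 0 < S x.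
Proof.
  intros Hq HS Hx. assert (Sl := S_lower q S x Hq HS Hx).
  assert (0 < sqrt (2 * (1 - q))) by (apply sqrt_lt_R0; lra).
  assert (0 < sqrt (1 - x)) by (apply sqrt_lt_R0; lra). nra.
Qed.

Lemma S_unique q S1 S2 x : 0 <= q < 1 -> is_Sq q S1 -> is_Sq q S2 -> -1 < x < 1 -> S1 x = S2 x.
Proof.
  intros Hq H1 H2 Hx.
  assert (D0 : forall y, -1 < y < 1 -> derivable_pt_lim (fun t => S1 t - S2 t) y 0).
  { intros y Hy. eapply D_eq; [|apply D_minus; [apply (S_der q); auto| apply (S_der q); auto]]. ring. }
  assert (L0 : lim1 (fun t => S1 t - S2 t) 0).
  { replace 0 with (0 - 0) by ring. apply lim1_minus; [apply (lim1_S q)|apply (lim1_S q)]; auto. }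
  assert (A := cmp_lemma (fun t => S1 t - S2 t) (fun _ => 0) (-1) D0 ltac:(intros; lra) L0 x Hx).
  assert (B := cmp_lemma (fun t => (-1) * (S1 t - S2 t)) (fun _ => (-1) * 0) (-1)).
  assert (0 <= (-1) * (S1 x - S2 x)).
  { apply B; auto.
    - intros y Hy. apply D_mult; [apply D_const| auto] || (eapply D_eq; [|apply D_mult; [apply D_const|apply D0; auto]]; cbv beta; ring).
    - intros; lra.
    - replace 0 with ((-1) * 0) by ring. apply lim1_scal; auto. }
  cbv beta in A. lra.
Qed.

Lemma S_surj q S s : 0 <= q < 1 -> is_Sq q S -> 0 < s <= S (-1/2) ->
  exists x, -1/2 <= x < 1 /\ S x = s.
Proof.
  intros Hq HS Hs.
  destruct (Req_dec s (S (-1/2))) as [E|Ne].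
  { exists (-1/2). split; [lra|auto]. }
  destruct (lim1_S q S HS s ltac:(lra)) as [d [Hd Hd']].
  set (x1 := Rmax (1 - d/2) 0).
  assert (x1 < 1) by (unfold x1; apply Rmax_lub_lt; lra).
  assert (1 - d/2 <= x1) by apply Rmax_l. assert (0 <= x1) by apply Rmax_r.
  assert (A := Hd' x1 ltac:(lra)). rewrite Rminus_0_r in A. apply Rabs_def2 in A.
  destruct (IVT_interv (fun t => s - S t) (-1/2) x1) as [z [Hz Ez]].
  - intros a Ha. apply continuity_pt_minus; [apply continuity_pt_const; intros u v; auto|].
    apply (S_cont q); auto; lra.
  - lra.
  - lra.
  - lra.
  - exists z. split; [lra|]. 
    assert (z < 1) by lra. lra.
Qed.

Definition Xinv (S : R -> R) (s : R) := epsilon (inhabits 0) (fun x => -1/2 <= x < 1 /\ S x = s).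

Lemma X_spec q S s : 0 <= q < 1 -> is_Sq q S -> 0 < s <= S (-1/2) ->
  -1/2 <= Xinv S s < 1 /\ S (Xinv S s) = s.
Proof.
  intros Hq HS Hs. unfold Xinv. apply epsilon_spec. apply (S_surj q); auto.
Qed.

Lemma S_range q S x : 0 <= q < 1 -> is_Sq q S -> -1/2 <= x < 1 -> 0 < S x <= S (-1/2).
Proof.
  intros Hq HS Hx. split; [apply (S_pos q); auto; lra|].
  destruct (Req_dec x (-1/2)) as [->|Ne]; [lra|]. left; apply (S_decr q); auto; lra.
Qed.

Lemma S_inj q S x y : 0 <= q < 1 -> is_Sq q S -> -1 < x < 1 -> -1 < y < 1 -> S x = S y -> x = y.
Proof.
  intros Hq HS Hx Hy E. destruct (Rtotal_order x y) as [h|[h|h]]; auto.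
  - assert (S y < S x) by (apply (S_decr q); auto; lra). lra.
  - assert (S x < S y) by (apply (S_decr q); auto; lra). lra.
Qed.

Lemma X_S q S x : 0 <= q < 1 -> is_Sq q S -> -1/2 <= x < 1 -> Xinv S (S x) = x.
Proof.
  intros Hq HS Hx. destruct (X_spec q S (S x) Hq HS (S_range q S x Hq HS Hx)) as [A B].
  apply (S_inj q S); auto; lra.
Qed.

Lemma X_le q S s x1 : 0 <= q < 1 -> is_Sq q S -> 0 < s <= S (-1/2) -> -1/2 <= x1 < 1 -> S x1 <= s ->
  Xinv S s <= x1.
Proof.
  intros Hq HS Hs Hx1 Hle. destruct (X_spec q S s Hq HS Hs) as [A B].
  destruct (Rle_or_lt (Xinv S s) x1) as [h|h]; auto.
  assert (S (Xinv S s) < S x1) by (apply (S_decr q); auto; lra). lra.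
Qed.

Lemma X_cont_der q S s : 0 <= q < 1 -> is_Sq q S -> 0 < s < S (-1/2) ->
  continuity_pt (Xinv S) s /\
  derivable_pt_lim (Xinv S) s (- gg q (Xinv S s) / (1 - q * (Xinv S s)^2)).
Proof.
  intros Hq HS Hs.
  destruct (X_spec q S s Hq HS ltac:(lra)) as [Xs ESs].
  set (x0 := Xinv S s) in *.
  set (x1 := (x0 + 1) / 2).
  assert (Hx1 : x0 < x1 < 1) by (unfold x1; lra).
  assert (S1 : S x1 < s) by (rewrite <- ESs; apply (S_decr q); auto; lra).
  assert (S1p : 0 < S x1) by (apply (S_pos q); auto; lra).
  set (f := fun y => - S y). set (g := fun t => Xinv S (- t)).
  assert (fg : forall t, - S (-1/2) <= t -> t <= - S x1 -> comp f g t = id t).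
  { intros t H1 H2. unfold comp, f, g, id.
    destruct (X_spec q S (-t) Hq HS ltac:(lra)) as [_ E]. rewrite E. ring. }
  assert (grange : forall t, - S (-1/2) <= t -> t <= - S x1 -> -1/2 <= g t <= x1).
  { intros t H1 H2. unfold g. destruct (X_spec q S (-t) Hq HS ltac:(lra)) as [A _].
    split; [lra|]. apply (X_le q); auto; lra. }
  assert (gcont : continuity_pt g (- s)).
  { apply (continuity_pt_recip_interv f g (-1/2) x1 ltac:(lra)).
    - intros a b Ha Hab Hb. unfold f. assert (S b < S a) by (apply (S_decr q); auto; lra). lra.
    - unfold f. intros; apply fg; lra.
    - unfold f. intros; apply grange; lra.
    - intros a Ha. unfold f. apply continuity_pt_opp. apply (S_cont q); auto; lra.
    - unfold f. lra. }
  assert (Xe : forall u, Xinv S u = g (- u)) by (intros; unfold g; rewrite Ropp_involutive; auto).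
  split.
  - apply (continuity_pt_locally_ext (fun u => g (- u)) (Xinv S) 1 s); [lra| intros; symmetry; apply Xe|].
    apply (continuity_pt_comp (fun u => - u) g). { eapply cont_of_D. apply derivable_pt_lim_opp, derivable_pt_lim_id. }
    exact gcont.
  - assert (glb : g (- S (-1/2)) = -1/2).
    { unfold g. rewrite Ropp_involutive. apply (X_S q); auto; lra. }
    assert (gub : g (- S x1) = x1).
    { unfold g. rewrite Ropp_involutive. apply (X_S q); auto; lra. }
    assert (fder : forall a, -1 < a < 1 -> derivable_pt_lim f a ((1 - q * a^2) / gg q a)).
    { intros a Ha. unfold f. eapply D_eq; [|apply (derivable_pt_lim_opp S); apply (S_der q); auto]. ring. }
    assert (Prf : forall a, g (- S (-1/2)) <= a <= g (- S x1) -> derivable_pt f a).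
    { intros a Ha. rewrite glb, gub in Ha. exists ((1 - q * a^2) / gg q a). apply fder. lra. }
    assert (Prg_incr : g (- S (-1/2)) <= g (- s) <= g (- S x1)).
    { rewrite glb, gub. apply grange; lra. }
    assert (Hgs : g (- s) = x0) by (unfold g, x0; rewrite Ropp_involutive; auto).
    assert (Hd := derivable_pt_lim_recip_interv f g (- S (-1/2)) (- S x1) (- s) Prf gcont
       ltac:(lra) ltac:(lra2) Prg_incr ltac:(intros; apply fg; lra)).
    assert (Ev : derive_pt f (g (- s)) (Prf (g (- s)) Prg_incr) = (1 - q * x0^2) / gg q x0).
    { apply derive_pt_eq_0. rewrite Hgs. apply fder. lra. }
    rewrite Ev in Hd.
    assert (h := r_pos q x0 Hq ltac:(lra2)). assert (hg := gg_pos q x0 Hq ltac:(lra2)).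
    assert (Hd2 := Hd ltac:(apply Rgt_not_eq; apply Rdiv_lt_0_compat; lra)).
    apply (derivable_pt_lim_locally_ext (fun u => g (- u)) (Xinv S) s (s - 1) (s + 1)); [lra| intros; symmetry; apply Xe|].
    eapply D_eq; [|apply (D_comp (fun u => - u) g); [apply derivable_pt_lim_opp, derivable_pt_lim_id| exact Hd2]].
    field. lra.
Qed.


Definition Einv q x := exp (/4 * ln (1 - x^2) + /4 * ln (1 - q*x^2)).
Definition N1 q y := (-1/2) * y * (1 * /(1-y^2) + q * /(1-q*y^2)).

Lemma phi_Einv q x : phi q x * Einv q x = 1.
Proof.
  unfold phi, Einv, Rpower. rewrite <- !exp_plus. rewrite <- exp_0. f_equal. field.
Qed.

Lemma Einv_der q x : 0 <= q < 1 -> -1 < x < 1 -> derivable_pt_lim (Einv q) x (Einv q x * N1 q x).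
Proof.
  intros Hq Hx. assert (h := r_pos q x Hq ltac:(lra2)). assert (0 < 1 - x^2) by nra.
  unfold Einv. eapply D_eq; [|apply D_exp; apply D_plus; (apply D_mult; [apply D_const|apply D_ln]);
    [| |apply D_minus; [apply D_const| apply D_mult; [apply D_const|apply D_pow2, D_id]] |];
    [apply D_minus; [apply D_const|apply D_pow2, D_id]|lra | lra]].
  unfold N1. cbv beta. field. lra.
Qed.

Lemma N1_der q x : 0 <= q < 1 -> -1 < x < 1 -> exists l, derivable_pt_lim (N1 q) x l /\
   l = -(1/2)*(1/(1-x^2)+q/(1-q*x^2)) - x^2*(1/(1-x^2)^2+q^2/(1-q*x^2)^2).
Proof.
  intros Hq Hx. assert (h := r_pos q x Hq ltac:(lra2)). assert (0 < 1 - x^2) by nra.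
  eexists. split.
  - unfold N1. apply D_mult.
    + apply D_mult; [apply D_const|apply D_id].
    + apply D_plus; (apply D_mult; [apply D_const| apply D_inv; [|lra]]).
      * apply D_minus; [apply D_const|apply D_pow2, D_id].
      * apply D_minus; [apply D_const|apply D_mult; [apply D_const|apply D_pow2, D_id]].
  - cbv beta. unfold fct_cte. field. lra.
Qed.

Lemma ode_core q chi (psi psi1 psi2 : R -> R) x :
  0 <= q < 1 -> -1 < x < 1 ->
  derivable_pt_lim psi x (psi1 x) -> derivable_pt_lim psi1 x (psi2 x) ->
  (1 - x^2) * psi2 x - 2*x*psi1 x + chi*(1 - q*x^2) * psi x = 0 ->
  exists l, derivable_pt_lim (fun y => - (psi1 y * Einv q y + psi y * (Einv q y * N1 q y)) * gg q y * / (1 - q*y^2)) x l /\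
   l * (- gg q x / (1 - q*x^2)) + chi * (psi x * Einv q x) =
     (- (1/(4*((1-x^2)*(1-q*x^2)))) + PP q x) * (psi x * Einv q x).
Proof.
  intros Hq Hx D1 D2 Ode.
  assert (h := r_pos q x Hq ltac:(lra2)). assert (hp : 0 < 1 - x^2) by nra.
  assert (hg := gg_pos q x Hq Hx). assert (HG := gg_sq q x Hq Hx).
  destruct (N1_der q x Hq Hx) as [n1 [Dn En]].
  assert (DE := Einv_der q x Hq Hx).
  eexists. split.
  - apply D_mult; [apply D_mult|].
    + apply derivable_pt_lim_opp. apply D_plus; apply D_mult; eauto. apply D_mult; eauto.
    + apply gg_der; auto.
    + apply D_inv; [|lra]. apply D_minus; [apply D_const|apply D_mult; [apply D_const|apply D_pow2, D_id]].
  - cbv beta. rewrite En.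
    assert (P2 : psi2 x = (2*x*psi1 x - chi*(1 - q*x^2) * psi x) / (1 - x^2)).
    { apply (Rmult_eq_reg_l (1 - x^2)); [|lra].
      replace ((1 - x^2) * ((2*x*psi1 x - chi*(1 - q*x^2) * psi x) / (1 - x^2))) with (2*x*psi1 x - chi*(1 - q*x^2) * psi x) by (field; lra).
      lra. }
    rewrite P2. unfold N1, PP.
    set (G := gg q x) in *. set (E := Einv q x).
    field_simplify; [|repeat split; lra|repeat split; lra].
    replace (G^3) with (G * ((1-x^2)*(1-q*x^2))) by (rewrite <- HG; ring).
    assert (0 < 1 - q*x^2) by lra.
    assert (0 < (1 - q*x^2)^3) by (apply pow_lt; lra).
    assert (0 < (1 - q*x^2)^4) by (apply pow_lt; lra).
    assert (0 < (1 - x^2)^2) by (apply pow_lt; lra).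
    field. split.
    + match goal with |- ?a <> 0 => replace a with (4*(1-x^2)*(1-q*x^2)^3) by ring end.
      apply Rgt_not_eq. apply Rmult_lt_0_compat; [apply Rmult_lt_0_compat|]; lra.
    + match goal with |- ?a <> 0 => replace a with (4*G*(1-x^2)^2*(1-q*x^2)^4) by ring end.
      apply Rgt_not_eq. apply Rmult_lt_0_compat; [apply Rmult_lt_0_compat; [apply Rmult_lt_0_compat|]|]; lra.
Qed.


Definition Fdef (q s : R) : R :=
  if Rle_dec s 0 then Lq q
  else epsilon (inhabits 0) (fun v => forall S, is_Sq q S -> forall x, 0 <= x < 1 -> S x = s -> v = Hx q s x).

Lemma X_nonneg q S s : 0 <= q < 1 -> is_Sq q S -> 0 < s <= S 0 -> 0 <= Xinv S s.
Proof.
  intros Hq HS Hs.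
  assert (S 0 < S (-1/2)) by (apply (S_decr q); auto; lra).
  destruct (X_spec q S s Hq HS ltac:(lra)) as [A B].
  destruct (Rle_or_lt 0 (Xinv S s)) as [h|h]; auto.
  assert (S 0 < S (Xinv S s)) by (apply (S_decr q); auto; lra). lra.
Qed.

Lemma F_eq q S s : 0 <= q < 1 -> is_Sq q S -> 0 < s <= S 0 -> Fdef q s = Hx q s (Xinv S s).
Proof.
  intros Hq HS Hs. unfold Fdef. destruct (Rle_dec s 0) as [h|h]; [lra|].
  assert (S0 : S 0 < S (-1/2)) by (apply (S_decr q); auto; lra).
  destruct (X_spec q S s Hq HS ltac:(lra)) as [A B].
  assert (X0 := X_nonneg q S s Hq HS Hs).
  set (P := fun v => forall S, is_Sq q S -> forall x, 0 <= x < 1 -> S x = s -> v = Hx q s x).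
  assert (HP : P (Hx q s (Xinv S s))).
  { intros S' HS' x Hx' E. rewrite <- (S_unique q S S' x Hq HS HS' ltac:(lra2)) in E.
    f_equal. apply (S_inj q S); auto; lra. }
  assert (Hex : exists v, P v) by (exists (Hx q s (Xinv S s)); auto).
  assert (Sp := epsilon_spec (inhabits 0) P Hex). fold P.
  apply (Sp S HS); auto; lra.
Qed.

Lemma G_cont q S s0 : 0 <= q < 1 -> is_Sq q S -> 0 < s0 < S (-1/2) ->
  continuity_pt (fun s => Hx q s (Xinv S s)) s0.
Proof.
  intros Hq HS Hs.
  destruct (X_spec q S s0 Hq HS ltac:(lra)) as [A B].
  destruct (X_cont_der q S s0 Hq HS Hs) as [CX _].
  set (y0 := Xinv S s0) in *.
  assert (h := r_pos q y0 Hq ltac:(lra2)). assert (0 < 1 - y0^2) by nra.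
  assert (C1 : continuity_pt (fun s => 1/(4*s^2)) s0).
  { reg. simpl. apply Rgt_not_eq. assert (0 < s0 * s0) by nra. nra. }
  assert (C2 : continuity_pt (fun y => 1/(4*((1-y^2)*(1-q*y^2)))) y0).
  { reg. simpl. apply Rgt_not_eq. assert (0 < (1 - y0*(y0*1)) * (1 - q*(y0*(y0*1)))) by (apply Rmult_lt_0_compat; simpl in *; nra). nra. }
  assert (C3 : continuity_pt (PP q) y0) by (unfold PP; reg; simpl in *; nra).
  assert (C := continuity_pt_plus _ _ s0 (continuity_pt_minus _ _ s0 C1
     (continuity_pt_comp (Xinv S) _ s0 CX C2)) (continuity_pt_comp (Xinv S) _ s0 CX C3)).
  apply (continuity_pt_locally_ext _ (fun s => Hx q s (Xinv S s)) 1 s0 ltac:(lra) ltac:(intros; reflexivity) C).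
Qed.

Theorem lemma2 :
  exists F : R -> R -> R,
  forall (c : R) (n : nat) (chi : R) (psi S U : R -> R),
    0 <= c ->
    is_pswf c n chi psi ->
    0 < chi ->
    c^2 / chi < 1 ->
    is_Sq (c^2 / chi) S ->
    (forall x, -1 < x < 1 -> psi x = phi (c^2 / chi) x * U (S x)) ->
    cont_on_closed (F (c^2 / chi)) 0 (S 0) /\
    (forall s, 0 <= s <= S 0 -> Rabs (F (c^2 / chi) s) <= 3 / (1 - c^2 / chi)^3) /\
    exists U' U'' : R -> R,
      (exists eps, eps > 0 /\
         forall s, 0 < s < S 0 + eps -> derivable_pt_lim U s (U' s)) /\
      (forall s, 0 < s <= S 0 ->
         derivable_pt_lim U' s (U'' s) /\
         U'' s + (chi + 1 / (4 * s^2)) * U s = F (c^2 / chi) s * U s).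
Proof.
  exists Fdef.
  intros c n chi psi S U Hc Hpswf Hchi Hq1 HS Hrel.
  set (q := c^2 / chi) in *.
  assert (Hq : 0 <= q < 1).
  { split; auto. unfold q. unfold Rdiv. apply Rmult_le_pos; [apply pow2_ge_0| left; apply Rinv_0_lt_compat; lra]. }
  assert (S0p : 0 < S 0) by (apply (S_pos q); auto; lra).
  assert (S0m : S 0 < S (-1/2)) by (apply (S_decr q); auto; lra).
  split; [|split].
  -
    intros x0 Hx0 eps He.
    destruct (Req_dec x0 0) as [E0|N0].
    + subst x0.
      destruct (Hx_lim q S Hq HS eps He) as [d1 [Hd1 Hd1']].
      set (x1 := Rmax (1 - d1/2) 0).
      assert (x1 < 1) by (unfold x1; apply Rmax_lub_lt; lra).
      assert (1 - d1/2 <= x1) by apply Rmax_l. assert (0 <= x1) by apply Rmax_r.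
      assert (Sx1 : 0 < S x1) by (apply (S_pos q); auto; lra).
      exists (S x1). split; [lra|]. intros y Hy Hyd.
      assert (F0 : Fdef q 0 = Lq q) by (unfold Fdef; destruct (Rle_dec 0 0); [auto|lra]).
      rewrite F0.
      destruct (Req_dec y 0) as [->|Ny].
      { rewrite F0, Rminus_diag, Rabs_R0; lra. }
      rewrite Rminus_0_r, Rabs_pos_eq in Hyd by lra.
      rewrite (F_eq q S y Hq HS ltac:(lra2)).
      destruct (X_spec q S y Hq HS ltac:(lra2)) as [A B].
      assert (x1 < Xinv S y).
      { destruct (Rle_or_lt (Xinv S y) x1) as [h|h]; auto.
        destruct (Req_dec (Xinv S y) x1) as [e|e]; [rewrite e in B; lra|].
        assert (S x1 < S (Xinv S y)) by (apply (S_decr q); auto; lra). lra. }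
      assert (T := Hd1' (Xinv S y) ltac:(lra)). rewrite B in T. exact T.
    + assert (Hs0 : 0 < x0 < S (-1/2)) by lra.
      destruct (G_cont q S x0 Hq HS Hs0 eps He) as [d [Hd Hd']].
      exists (Rmin d x0). split; [apply Rmin_pos; lra|]. intros y Hy Hyd.
      assert (Rmin d x0 <= d) by apply Rmin_l. assert (Rmin d x0 <= x0) by apply Rmin_r.
      destruct (Req_dec y x0) as [->|Ny]; [rewrite Rminus_diag, Rabs_R0; lra|].
      assert (0 < y) by (apply Rabs_def2 in Hyd; lra).
      rewrite (F_eq q S y Hq HS ltac:(lra2)), (F_eq q S x0 Hq HS ltac:(lra2)).
      apply Hd'. split; [split; [exact I|auto]|]. simpl; unfold R_dist. lra.
  -
    intros s Hs. destruct (Req_dec s 0) as [->|Ns].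
    + assert (F0 : Fdef q 0 = Lq q) by (unfold Fdef; destruct (Rle_dec 0 0); [auto|lra]).
      rewrite F0. apply (Lq_bound q S); auto.
    + rewrite (F_eq q S s Hq HS ltac:(lra2)).
      destruct (X_spec q S s Hq HS ltac:(lra2)) as [A B].
      assert (X0 := X_nonneg q S s Hq HS ltac:(lra2)).
      rewrite <- B at 1. apply Hx_bound; auto; lra.
  -
    destruct Hpswf as [_ [[psi1 [psi2 Hode]] _]].
    set (X := Xinv S).
    set (h1 := fun y => psi1 y * Einv q y + psi y * (Einv q y * N1 q y)).
    set (k1 := fun y => - (psi1 y * Einv q y + psi y * (Einv q y * N1 q y)) * gg q y * / (1 - q*y^2)).
    set (Pl := fun s l => derivable_pt_lim k1 (X s) l /\
       l * (- gg q (X s) / (1 - q*(X s)^2)) + chi * (psi (X s) * Einv q (X s)) =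
       (- (1/(4*((1-(X s)^2)*(1-q*(X s)^2)))) + PP q (X s)) * (psi (X s) * Einv q (X s))).
    set (L2 := fun s => epsilon (inhabits 0) (Pl s)).
    assert (HL2 : forall s, 0 < s < S (-1/2) -> Pl s (L2 s)).
    { intros s Hs. destruct (X_spec q S s Hq HS ltac:(lra2)) as [A B].
      unfold L2. apply epsilon_spec.
      destruct (Hode (X s) ltac:(unfold X; lra2)) as [Da [Db Dc]].
      apply (ode_core q chi psi psi1 psi2 (X s) Hq ltac:(unfold X; lra2) Da Db).
      rewrite <- Dc. unfold q. field. lra. }
    assert (Ueq : forall y, 0 < y < S (-1/2) -> U y = psi (X y) * Einv q (X y)).
    { intros y Hy. destruct (X_spec q S y Hq HS ltac:(lra2)) as [A B].
      rewrite (Hrel (X y) ltac:(unfold X; lra2)). fold X in B. rewrite B.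
      rewrite Rmult_comm, <- Rmult_assoc. rewrite (Rmult_comm (Einv q (X y))), phi_Einv. ring. }
    exists (fun s => k1 (X s)), (fun s => L2 s * (- gg q (X s) / (1 - q*(X s)^2))).
    split.
    + exists (S (-1/2) - S 0). split; [lra|]. intros s Hs.
      destruct (X_spec q S s Hq HS ltac:(lra2)) as [A B].
      destruct (X_cont_der q S s Hq HS ltac:(lra2)) as [_ DX].
      destruct (Hode (X s) ltac:(unfold X; lra2)) as [Da [Db Dc]].
      apply (derivable_pt_lim_locally_ext (fun y => psi (X y) * Einv q (X y)) U s 0 (S (-1/2))); [lra| intros; symmetry; apply Ueq; auto|].
      eapply D_eq; [|apply (D_comp X (fun y => psi y * Einv q y)); [exact DX| apply D_mult; [exact Da| apply Einv_der; auto; unfold X; lra2]]].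
      unfold k1. fold X. assert (h := r_pos q (X s) Hq ltac:(unfold X; lra2)). field. lra.
    + intros s Hs. assert (Hs' : 0 < s < S (-1/2)) by lra.
      destruct (HL2 s Hs') as [Dk Id].
      destruct (X_cont_der q S s Hq HS Hs') as [_ DX].
      split.
      * apply (D_comp X k1); [exact DX| exact Dk].
      * rewrite (Ueq s Hs'). rewrite (F_eq q S s Hq HS ltac:(lra2)). fold X. unfold Hx.
        replace (L2 s * (- gg q (X s) / (1 - q * X s ^ 2)) +
          (chi + 1 / (4 * s ^ 2)) * (psi (X s) * Einv q (X s))) with
          ((L2 s * (- gg q (X s) / (1 - q * X s ^ 2)) + chi * (psi (X s) * Einv q (X s))) +
           1 / (4 * s ^ 2) * (psi (X s) * Einv q (X s))) by ring.
        rewrite Id. ring.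
Qed.
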